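(* For every integer $m\ge2$ and all nonnegative integers $k_1,\dots,k_{m-1}$, $d^{(m)}_{k_1,\dots,k_{m-1}}$ is a positive integer divisible by $m$.
   Context: For $1\le j\le m$ and integers $k_1,\dots,k_{m-1}\ge0$, $e^{(m),j}_{k_1,\dots,k_{m-1}}=\prod_{1\le i\le m,\,i\ne j}(i-j)^{k_{(i-j)\bmod m}}$, where $(i-j)\bmod m$ denotes the representative in $\{1,\dots,m-1\}$. Then $d^{(m)}_{k_1,\dots,k_{m-1}}=2\sum_{j=1}^{p}e^{(m),j}_{k_1,\dots,k_{m-1}}$ if $m=2p$, and $d^{(m)}_{k_1,\dots,k_{m-1}}=e^{(m),p+1}_{k_1,\dots,k_{m-1}}+2\sum_{j=1}^{p}e^{(m),j}_{k_1,\dots,k_{m-1}}$ if $m=2p+1$. *)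

(* Defs.v *)
From HB Require Import structures.
From mathcomp Require Import all_boot all_order all_algebra.
Set Implicit Arguments. Unset Strict Implicit. Unset Printing Implicit Defensive.
Import Order.TTheory GRing.Theory Num.Theory.
Local Open Scope ring_scope.

(* The exponents k_1,...,k_{m-1} are given as a function k : nat -> nat;
   only the values k 1, ..., k (m-1) are used. *)

Definition resmod (m i j : nat) : nat := ((i + m - j) %% m)%N.

Definition e_coef (m : nat) (k : nat -> nat) (j : nat) : int :=
  \prod_(1 <= i < m.+1 | i != j) ((i%:Z - j%:Z) ^+ (k (resmod m i j))).

Definition d_coef (m : nat) (k : nat -> nat) : int :=
  let p := m./2 in
  if odd m then e_coef m k p.+1 + 2 * \sum_(1 <= j < p.+1) e_coef m k j
  else 2 * \sum_(1 <= j < p.+1) e_coef m k j.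

(* Main.v *)
Require Import Defs.
From HB Require Import structures.
From mathcomp Require Import all_boot all_order all_algebra.
Import Order.TTheory GRing.Theory Num.Theory.
Local Open Scope ring_scope.
From mathcomp Require Import ring lra zify.

Lemma drop_filter a b (P : pred nat) (F : nat -> int) :
  (forall i, (a <= i < b)%N -> P i) ->
  \prod_(a <= i < b | P i) F i = \prod_(a <= i < b) F i.
Proof.
move=> h; rewrite big_nat_cond [RHS]big_nat_cond; apply: eq_bigl => i.
by case: (boolP (a <= i < b)%N) => //= /h ->.
Qed.

Lemma rev1 (F : nat -> int) j :
  \prod_(1 <= i < j) F i = \prod_(1 <= t < j) F (j - t)%N.
Proof.
rewrite big_nat_rev; apply: eq_big_nat => i /andP[h1 h2]; congr F; lia.
Qed.

Definition Gt (k : nat -> nat) (s : nat) : int := ((s.+1)%:Z) ^+ k s.+1.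
Definition Bp m k j := \prod_(0 <= s < m - j) Gt k s.
Definition Qp m (k : nat -> nat) j := \prod_(1 <= t < j) (- (t%:Z)) ^+ k (m - t)%N.
Definition Pp m (k : nat -> nat) j := \prod_(1 <= t < j) ((m - t)%N%:Z) ^+ k (m - t)%N.

Lemma eE m k j : (1 <= j <= m)%N -> e_coef m k j = Qp m k j * Bp m k j.
Proof.
move=> /andP[j1 jm]; rewrite /e_coef (@big_cat_nat _ _ _ j) //=; try lia.
rewrite drop_filter; last by move=> i; lia.
rewrite [X in _ * X = _]big_ltn_cond ?eqxx //=; try lia.
rewrite [X in _ * X = _]drop_filter; last by move=> i; lia.
congr (_ * _).
  rewrite rev1 /Qp; apply: eq_big_nat => t /andP[t1 tj].
  have -> : ((j - t)%N%:Z - j%:Z) = - t%:Z by lia.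
  congr (_ ^+ k _); rewrite /resmod.
  have -> : (j - t + m - j = m - t)%N by lia.
  rewrite modn_small //; lia.
rewrite (big_addn 0 m.+1 j.+1) subSS /Bp; apply: eq_big_nat => i /andP[_ hi].
rewrite /Gt.
have -> : ((i + j.+1)%N%:Z - j%:Z) = i.+1%:Z by lia.
congr (_ ^+ k _); rewrite /resmod.
have -> : (i + j.+1 + m - j = i.+1 + m)%N by lia.
rewrite modnDr modn_small //; lia.
Qed.

Lemma e1E m k : (2 <= m)%N -> e_coef m k 1 = Bp m k 1.
Proof.
move=> hm; rewrite eE; try lia.
by rewrite /Qp big_geq // mul1r.
Qed.

Lemma revtop (F : nat -> int) m j : (j < m)%N ->
  \prod_(m - j.+1 <= s < m - 1) F s = \prod_(1 <= t < j.+1) F (m - 1 - t)%N.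
Proof.
elim: j => [|j IH] hj.
  by rewrite !big_geq //; lia.
rewrite big_ltn; try lia.
have -> : (m - j.+2).+1 = (m - j.+1)%N by lia.
rewrite IH; try lia.
rewrite mulrC [RHS]big_nat_recr //=; congr (_ * F _); lia.
Qed.

Lemma e1split m k j : (1 <= j <= m)%N -> (2 <= m)%N -> e_coef m k 1 = Pp m k j * Bp m k j.
Proof.
move=> /andP[j1 jm] hm; rewrite e1E //.
rewrite /Bp (@big_cat_nat _ _ _ (m - j)) //=; try lia.
rewrite mulrC; congr (_ * _).
case: j j1 jm => // j _ jm.
rewrite revtop; try lia.
apply: eq_big_nat => t /andP[t1 tj]; rewrite /Gt.
have -> : (m - 1 - t).+1 = (m - t)%N by lia.
by [].
Qed.

Lemma Bp_gt0 m k j : 0 < Bp m k j.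
Proof. by apply: prodr_gt0 => s _; apply: exprn_gt0. Qed.

Lemma dvd_mul_congr (c a b a' b' : int) :
  (c %| a - b)%Z -> (c %| a' - b')%Z -> (c %| a * a' - b * b')%Z.
Proof.
move=> h1 h2.
have -> : a * a' - b * b' = a * (a' - b') + (a - b) * b' by ring.
by apply: rpredD; [apply: dvdz_mull | apply: dvdz_mulr].
Qed.

Lemma dvd_pow (c a b : int) n : (c %| a - b)%Z -> (c %| a ^+ n - b ^+ n)%Z.
Proof.
move=> h; elim: n => [|n IH]; first by rewrite !expr0 subrr dvdz0.
by rewrite !exprS; apply: dvd_mul_congr.
Qed.

Lemma QP_dvd m k j : (j <= m)%N -> (m%:Z %| Qp m k j - Pp m k j)%Z.
Proof.
move=> jm; rewrite /Qp /Pp !big_nat.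
apply: (big_ind2 (fun x y => (m%:Z %| x - y)%Z)).
- by rewrite subrr dvdz0.
- by move=> x1 x2 y1 y2 h1 h2; apply: dvd_mul_congr.
- move=> t /andP[t1 tj]; apply: dvd_pow.
  have -> : - t%:Z - (m - t)%N%:Z = - m%:Z by lia.
  by rewrite rpredN dvdzz.
Qed.

Lemma e_mod m k j : (1 <= j <= m)%N -> (2 <= m)%N ->
  (m%:Z %| e_coef m k j - e_coef m k 1)%Z.
Proof.
move=> hj hm; rewrite (eE _ _ _ hj) (e1split _ _ _ hj hm) -mulrBl.
apply: dvdz_mulr; apply: QP_dvd; lia.
Qed.

Lemma e_zero m k j : (1 <= j <= m)%N -> (2 <= m)%N ->
  (forall t, (1 <= t < j)%N -> k (m - t)%N = 0%N) ->
  e_coef m k j = e_coef m k 1.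
Proof.
move=> hj hm hz; rewrite (eE _ _ _ hj) (e1split _ _ _ hj hm).
suff [-> ->] : Qp m k j = 1 /\ Pp m k j = 1 by [].
split; rewrite ?/Qp ?/Pp.
  rewrite (eq_big_nat _ _ (F2 := fun=> 1)) ?big1_eq // => t ht; by rewrite hz ?expr0.
rewrite (eq_big_nat _ _ (F2 := fun=> 1)) ?big1_eq // => t ht; by rewrite hz ?expr0.
Qed.

Lemma e_bound m k j t0 : (1 <= t0 < j)%N -> (j.*2 <= m.+1)%N ->
  (0 < k (m - t0))%N ->
  - (t0%:Z * e_coef m k 1) <= (m - t0)%N%:Z * e_coef m k j.
Proof.
move=> /andP[t1 tj] jm kpos.
have hj : (1 <= j <= m)%N by lia.
have hm : (2 <= m)%N by lia.
rewrite (eE _ _ _ hj) (e1split _ _ _ hj hm).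
set B := Bp m k j.
have B0 : 0 <= B by apply: ltW; apply: Bp_gt0.
suff H : (m - t0)%N%:Z * (- (Qp m k j * B)) <= t0%:Z * (Pp m k j * B).
  by rewrite mulrN in H; lra.
have h1 : - (Qp m k j * B) <= `|Qp m k j| * B.
  by rewrite -[X in _ <= _ * X](ger0_norm B0) -normrM ler_normr lexx orbT.
apply: (le_trans (y := (m - t0)%N%:Z * (`|Qp m k j| * B))).
  by rewrite ler_wpM2l //.
rewrite !mulrA; apply: ler_wpM2r => //.
have -> : `|Qp m k j| = \prod_(1 <= t < j) (t%:Z) ^+ k (m - t)%N.
  rewrite /Qp normr_prod; apply: eq_big_nat => t _.
  by rewrite normrX normrN.
rewrite /Pp (@big_cat_nat _ _ _ t0) //=; try lia.
rewrite [X in _ <= _ * X](@big_cat_nat _ _ _ t0) //=; try lia.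
rewrite !(@big_ltn _ _ _ t0 j) //.
set Q1 := \prod_(1 <= i < t0) _.
set Q2 := \prod_(t0.+1 <= i < j) _.
set P1 := \prod_(1 <= i < t0) _.
set P2 := \prod_(t0.+1 <= i < j) _.
have HQP : forall a b, (1 <= a)%N -> (b <= j)%N ->
   0 <= \prod_(a <= i < b) (i%:Z) ^+ k (m - i)%N <=
        \prod_(a <= i < b) ((m - i)%N%:Z) ^+ k (m - i)%N.
  move=> a b ha hb; rewrite !big_nat.
  apply/andP; split; first by apply: prodr_ge0 => i _; apply: exprn_ge0.
  apply: ler_prod => i /andP[h1i h2i]; rewrite exprn_ge0 //=.
  by apply: lerXn2r; rewrite ?nnegrE //; lia.
have /andP[Q10 Q1P] := HQP 1%N t0 (leqnn 1) (ltnW tj).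
have /andP[Q20 Q2P] := HQP t0.+1 j (ltn0Sn t0) (leqnn j).
have key : (m - t0)%N%:Z * t0%:Z ^+ k (m - t0)%N <=
           t0%:Z * (m - t0)%N%:Z ^+ k (m - t0)%N.
  case: (k (m - t0)%N) kpos => // K _.
  rewrite !exprS !mulrA [X in _ <= X * _]mulrC.
  apply: ler_wpM2l; first by apply: mulr_ge0.
  by apply: lerXn2r; rewrite ?nnegrE //; lia.
have -> : (m - t0)%N%:Z * (Q1 * (t0%:Z ^+ k (m - t0)%N * Q2)) =
          (Q1 * Q2) * ((m - t0)%N%:Z * t0%:Z ^+ k (m - t0)%N) by ring.
have -> : t0%:Z * (P1 * ((m - t0)%N%:Z ^+ k (m - t0)%N * P2)) =
          (P1 * P2) * (t0%:Z * (m - t0)%N%:Z ^+ k (m - t0)%N) by ring.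
apply: ler_pM => //.
- by apply: mulr_ge0.
- by apply: mulr_ge0 => //; apply: exprn_ge0.
- by apply: ler_pM.
Qed.

Lemma core m k J : (2 <= m)%N -> (1 <= J)%N -> (J.*2 <= m.+1)%N ->
  exists t0, [/\ (1 <= t0 <= J)%N,
   forall j, (1 <= j <= t0)%N -> e_coef m k j = e_coef m k 1 &
   forall j, (t0 < j <= J)%N ->
     - (t0%:Z * e_coef m k 1) <= (m - t0)%N%:Z * e_coef m k j].
Proof.
move=> hm hJ hJm.
have exP : exists t, ((0 < t) && (0 < k (m - t)) || (J <= t))%N.
  by exists J; rewrite leqnn orbT.
case: (ex_minnP exP) => t0 Pt0 tmin.
have t0J : (t0 <= J)%N by apply: tmin; rewrite leqnn orbT.
have t01 : (1 <= t0)%N by move: Pt0; case/orP => [/andP[h _]|h]; lia.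
exists t0; split.
- by rewrite t01 t0J.
- move=> j hj; apply: e_zero => //; first by lia.
  move=> t ht; apply/eqP; rewrite -leqn0 leqNgt; apply/negP => kp.
  have : ((0 < t) && (0 < k (m - t)) || (J <= t))%N.
    by rewrite kp andbT; apply/orP; left; lia.
  move/tmin; lia.
- move=> j hj; apply: e_bound => //; try lia.
Qed.

Lemma sum_const_e (f : nat -> int) E a b :
  (forall j, (a <= j < b)%N -> f j = E) ->
  \sum_(a <= j < b) f j = E * (b - a)%N%:Z.
Proof. by move=> H; rewrite (eq_big_nat _ _ H) sumr_const_nat pmulrn mulrzz. Qed.

Lemma sum_lower (f : nat -> int) c L a b :
  (forall j, (a <= j < b)%N -> L <= c * f j) ->
  L * (b - a)%N%:Z <= c * \sum_(a <= j < b) f j.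
Proof.
move=> H.
have -> : L * (b - a)%N%:Z = \sum_(a <= j < b) L by rewrite sumr_const_nat pmulrn mulrzz.
rewrite mulr_sumr !big_nat; apply: ler_sum => j /H //.
Qed.

Theorem mainTheorem15 (m : nat) (k : nat -> nat) :
  (2 <= m)%N -> 0 < d_coef m k /\ (m%:Z %| d_coef m k)%Z.
Proof.
move=> hm.
have hmp := odd_double_half m.
have E0 : 0 < e_coef m k 1 by rewrite e1E //; apply: Bp_gt0.
set E := e_coef m k 1 in E0 *.
rewrite /d_coef; set p := m./2 in hmp *.
case ho: (odd m); move: hmp; rewrite ho /= -addnn => hmp.
-
  have hp : (1 <= p)%N by lia.
  split.
  + have [t0 [/andP[t01 t0J] Heq Hlt]] := @core m k p.+1 hm (ltn0Sn p) (ltac:(lia) : (p.+1.*2 <= m.+1)%N).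
    have [t0p|t0p] : (t0 = p.+1 \/ t0 <= p)%N by lia.
    * rewrite Heq ?(@sum_const_e _ E); try lia.
        rewrite -/E; have -> : (p.+1 - 1)%N%:Z = p%:Z by lia.
        have : 0 <= p%:Z by []. nra.
      move=> j hj; apply: Heq; lia.
    * rewrite (@big_cat_nat _ _ _ t0.+1) //=; try lia.
      rewrite (@sum_const_e _ E); last by move=> j hj; apply: Heq; lia.
      set S2 := \sum_(t0.+1 <= j < p.+1) _.
      have HS : - (t0%:Z * E) * (p.+1 - t0.+1)%N%:Z <= (m - t0)%N%:Z * S2.
        by apply: sum_lower => j hj; apply: Hlt; lia.
      have He : - (t0%:Z * E) <= (m - t0)%N%:Z * e_coef m k p.+1.
        by apply: Hlt; lia.
      set ep := e_coef m k p.+1 in He *.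
      have h1 : (m - t0)%N%:Z = 2 * p%:Z + 1 - t0%:Z by lia.
      have h2 : (p.+1 - t0.+1)%N%:Z = p%:Z - t0%:Z by lia.
      have h3 : (t0.+1 - 1)%N%:Z = t0%:Z by lia.
      rewrite h1 in HS He; rewrite h2 in HS; rewrite h3.
      have T0 : 0 < t0%:Z * E * (2 * p%:Z + 1) by apply: mulr_gt0; [apply: mulr_gt0|]; lia.
      have A0 : 0 < 2 * p%:Z + 1 - t0%:Z by lia.
      have hT : 1 <= t0%:Z by lia.
      have hTp : t0%:Z <= p%:Z by lia.
      nra.
  + have Hs : (m%:Z %| \sum_(1 <= j < p.+1) (e_coef m k j - E))%Z.
      by rewrite big_nat; apply: rpred_sum => j hj; apply: e_mod => //; lia.
    have -> : \sum_(1 <= j < p.+1) e_coef m k j =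
              \sum_(1 <= j < p.+1) (e_coef m k j - E) + E * p%:Z.
      by rewrite sumrB sumr_const_nat subSS subn0 pmulrn mulrzz; ring.
    have -> : e_coef m k p.+1 + 2 * (\sum_(1 <= j < p.+1) (e_coef m k j - E) + E * p%:Z)
       = (e_coef m k p.+1 - E) + 2 * \sum_(1 <= j < p.+1) (e_coef m k j - E) + m%:Z * E.
      by rewrite (_ : m%:Z = 2 * p%:Z + 1); [ring|lia].
    rewrite rpredD ?dvdz_mulr ?dvdzz //.
    apply: rpredD; last by apply: dvdz_mull.
    by apply: e_mod => //; lia.
-
  have hp : (1 <= p)%N by lia.
  split.
  + have [t0 [/andP[t01 t0J] Heq Hlt]] := @core m k p hm hp (ltac:(lia) : (p.*2 <= m.+1)%N).
    rewrite (@big_cat_nat _ _ _ t0.+1) //=; try lia.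
    rewrite (@sum_const_e _ E); last by move=> j hj; apply: Heq; lia.
    set S2 := \sum_(t0.+1 <= j < p.+1) _.
    have HS : - (t0%:Z * E) * (p.+1 - t0.+1)%N%:Z <= (m - t0)%N%:Z * S2.
      by apply: sum_lower => j hj; apply: Hlt; lia.
    have h1 : (m - t0)%N%:Z = 2 * p%:Z - t0%:Z by lia.
    have h2 : (p.+1 - t0.+1)%N%:Z = p%:Z - t0%:Z by lia.
    have h3 : (t0.+1 - 1)%N%:Z = t0%:Z by lia.
    rewrite h1 h2 in HS; rewrite h3.
    have T0 : 0 < t0%:Z * E * p%:Z by apply: mulr_gt0; [apply: mulr_gt0|]; lia.
    have A0 : 0 < 2 * p%:Z - t0%:Z by lia.
    have hT : 1 <= t0%:Z by lia.
    have hTp : t0%:Z <= p%:Z by lia.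
    nra.
  + have Hs : (m%:Z %| \sum_(1 <= j < p.+1) (e_coef m k j - E))%Z.
      by rewrite big_nat; apply: rpred_sum => j hj; apply: e_mod => //; lia.
    have -> : \sum_(1 <= j < p.+1) e_coef m k j =
              \sum_(1 <= j < p.+1) (e_coef m k j - E) + E * p%:Z.
      by rewrite sumrB sumr_const_nat subSS subn0 pmulrn mulrzz; ring.
    have -> : 2 * (\sum_(1 <= j < p.+1) (e_coef m k j - E) + E * p%:Z)
       = 2 * \sum_(1 <= j < p.+1) (e_coef m k j - E) + m%:Z * E.
      by rewrite (_ : m%:Z = 2 * p%:Z); [ring|lia].
    apply: rpredD; first by apply: dvdz_mull.
    by apply: dvdz_mulr; apply: dvdzz.
Qed.
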